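(* Let $M\in\mathbb{N}$, $N\ge0$, and let $\mathcal{G}=(\mathcal{V},\mathcal{E})$ be a countable connected graph of bounded maximal degree. Then $A_N\le 2MV_N$ as operators on $\ell^2(\mathfrak{M}_N)$. Moreover, for any $\mathcal{V}'\subset\mathfrak{M}_N$, letting $A_N'$ be the weighted adjacency operator on the subgraph of $\mathcal{G}^{M,N}$ induced by $\mathcal{V}'$ (i.e. $(A_N'f)(\mathfrak{m})=\sum_{\mathfrak{n}\in\mathcal{V}',\,\mathfrak{n}\sim\mathfrak{m}}w(\mathfrak{m},\mathfrak{n})f(\mathfrak{n})$ for $f\in\ell^2(\mathcal{V}')$, $\mathfrak{m}\in\mathcal{V}'$), we have $A_N'\le 2MV_N\restriction_{\ell^2(\mathcal{V}')}$.
   Context: $\mathfrak{M}_N$ is the set of finitely supported functions $\mathfrak{m}:\mathcal{V}\to\{0,1,\dots,M\}$ with $\sum_x\mathfrak{m}(x)=N$. The graph $\mathcal{G}^{M,N}$ has vertex set $\mathfrak{M}_N$, with $\mathfrak{m}\sim\mathfrak{n}$ iff there is an edge $\{x_+,x_-\}\in\mathcal{E}$ with $\mathfrak{m}(x_\pm)=\mathfrak{n}(x_\pm)\pm1$ and $\mathfrak{m}(z)=\mathfrak{n}(z)$ for all other $z$. For $\mathfrak{m}\sim\mathfrak{n}$, $w(\mathfrak{m},\mathfrak{n})=\prod_{x:\mathfrak{m}(x)\neq\mathfrak{n}(x)}\big(\frac{M}{2}(\mathfrak{m}(x)+\mathfrak{n}(x)+1)-\mathfrak{m}(x)\mathfrak{n}(x)\big)^{1/2}$.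 $(A_Nf)(\mathfrak{m})=\sum_{\mathfrak{n}\sim\mathfrak{m}}w(\mathfrak{m},\mathfrak{n})f(\mathfrak{n})$ and $V_N$ is multiplication by $V_N(\mathfrak{m})=\sum_{\{x,y\}\in\mathcal{E}}\big(\frac{M}{2}(\mathfrak{m}(x)+\mathfrak{m}(y))-\mathfrak{m}(x)\mathfrak{m}(y)\big)$. *)

(* Defs.v *)
From HB Require Import structures.
From mathcomp Require Import all_boot all_order all_algebra finmap.
From mathcomp Require Import all_classical all_reals all_analysis.
From mathcomp Require Import complex.
Import numFieldNormedType.Exports.
Import Order.TTheory GRing.Theory Num.Theory.

Set Implicit Arguments.
Unset Strict Implicit.
Unset Printing Implicit Defensive.

Local Open Scope classical_set_scope.
Local Open Scope ring_scope.
Local Open Scope fset_scope.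

(* The complex numbers C = R[i] over a real type R, seen as a numeric closed
   field (so that it carries conjugation, sqrtC, the partial order of
   numeric fields, and the norm topology provided by MathComp-Analysis). *)
Definition Cc (R : realType) : numClosedFieldType := (R[i] : numClosedFieldType).

(* Unordered (net) sums over a choiceType: limit of finite partial sums
   along the filter of finite subsets directed by inclusion. *)
Definition totally {I : choiceType} : set_system {fset I} :=
  filter_from setT (fun A => [set B | A `<=` B]).

Instance totally_filter {I : choiceType} : ProperFilter (@totally I).
Proof.
eapply filter_from_proper; last by move=> A _; exists A; rewrite /= fsubset_refl.
apply: filter_fromT_filter; first by exists fset0.
by move=> A B /=; exists (A `|` B) => P /=; rewrite fsubUset => /andP[].
Qed.

Definition psum {I : choiceType} {K : numFieldType} (x : I -> K) (A : {fset I}) : K :=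
  \sum_(i <- A) x i.

Definition usum {I : choiceType} {K : numFieldType} (x : I -> K) : K :=
  lim (fmap (psum x) totally).

Definition ell2_on {I : choiceType} {K : numClosedFieldType} (S : set I) (f : I -> K) : Prop :=
  cvg (fmap (psum (fun i => if `[< S i >] then `|f i| ^+ 2 else 0)) totally).

Section Configurations.
Variables (V : countType) (M N : nat).

Definition is_config (m : {fsfun V -> nat with 0%N}) : bool :=
  all (fun x => m x <= M)%N (finsupp m) && (\sum_(x <- finsupp m) m x == N)%N.

Definition config := {m : {fsfun V -> nat with 0%N} | is_config m}.

Definition cval (m : config) : V -> nat := fun x => (val m) x.

End Configurations.

Section Operators.
Variables (R : realType) (V : countType) (e : rel V) (M N : nat).
Local Notation K := (Cc R).
Local Notation cfg := (config V M N).

Definition cadj (m n : cfg) : Prop :=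
  exists xp xm : V, e xp xm /\
    cval m xp = (cval n xp).+1 /\ (cval m xm).+1 = cval n xm /\
    (forall z, z != xp -> z != xm -> cval m z = cval n z).

Definition weight (m n : cfg) : K :=
  \prod_(x <- finsupp (val m) `|` finsupp (val n) | cval m x != cval n x)
     sqrtC ((M%:R / 2) * (cval m x + cval n x + 1)%:R - (cval m x * cval n x)%:R).

Definition adjop (S : set cfg) (f : cfg -> K) (m : cfg) : K :=
  usum (fun n => if `[< S n /\ cadj m n >] then weight m n * f n else 0).

Definition A_N (f : cfg -> K) (m : cfg) : K :=
  usum (fun n => if `[< cadj m n >] then weight m n * f n else 0).

(* V_N(m) = sum over unordered edges {x,y} of (M/2 (m x + m y) - m x m y);
   written as half the sum over ordered pairs (x,y) with e x y *)
Definition V_N (m : cfg) : K :=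
  2^-1 * usum (fun p : V * V => if e p.1 p.2 then
       (M%:R / 2) * (cval m p.1 + cval m p.2)%:R - (cval m p.1 * cval m p.2)%:R
     else 0).

(* quadratic forms <f, A f> and <f, V f> on l^2(S) (inner product
   antilinear in the first slot); f is only evaluated on S *)
Definition qform_A (f : cfg -> K) : K :=
  usum (fun m => (f m)^* * A_N f m).

Definition qform_V (f : cfg -> K) : K :=
  usum (fun m => (f m)^* * (V_N m * f m)).

Definition qform_adjop (S : set cfg) (f : cfg -> K) : K :=
  usum (fun m => if `[< S m >] then (f m)^* * adjop S f m else 0).

Definition qform_V_on (S : set cfg) (f : cfg -> K) : K :=
  usum (fun m => if `[< S m >] then (f m)^* * (V_N m * f m) else 0).

End Operators.

Definition simple_graph {V : countType} (e : rel V) : Prop :=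
  (forall x y, e x y = e y x) /\ (forall x, ~~ e x x).

Definition connected_graph {V : countType} (e : rel V) : Prop :=
  forall x y : V, exists p : seq V, path e x p /\ last x p = y.

Definition bounded_degree {V : countType} (e : rel V) : Prop :=
  exists D : nat, forall x : V, exists s : seq V,
    (size s <= D)%N /\ (forall y, e x y -> y \in s).

(* Main.v *)
Require Import Defs.
From HB Require Import structures.
From mathcomp Require Import all_boot all_order all_algebra finmap.
From mathcomp Require Import all_classical all_reals all_analysis.
From mathcomp Require Import complex.
From mathcomp Require Import ring lra zify.
Import numFieldNormedType.Exports.
Import Order.TTheory GRing.Theory Num.Theory.
Local Open Scope classical_set_scope.
Local Open Scope ring_scope.
Set Implicit Arguments.
Unset Strict Implicit.
Unset Printing Implicit Defensive.
Section SeqSums.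
Variable (K : numDomainType) (T : eqType).

Lemma sum_supp_eq (r1 r2 : seq T) (h : T -> K) :
  uniq r1 -> uniq r2 -> (forall i, h i != 0 -> (i \in r1) = (i \in r2)) ->
  \sum_(i <- r1) h i = \sum_(i <- r2) h i.
Proof.
move=> u1 u2 H.
have E r : \sum_(i <- r) h i = \sum_(i <- [seq i <- r | h i != 0]) h i.
  by rewrite big_filter [RHS]big_mkcond; apply: eq_bigr => i _; case: eqP.
rewrite E [RHS]E; apply: perm_big; apply: uniq_perm; rewrite ?filter_uniq //.
by move=> i; rewrite !mem_filter; case: (boolP (h i != 0)) => //= /H.
Qed.

Lemma sum_supp_le (r1 r2 : seq T) (h : T -> K) :
  uniq r1 -> uniq r2 -> (forall i, 0 <= h i) ->
  (forall i, i \in r1 -> h i != 0 -> i \in r2) ->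
  \sum_(i <- r1) h i <= \sum_(i <- r2) h i.
Proof.
move=> u1 u2 h0 H.
rewrite (@sum_supp_eq r1 [seq i <- r2 | i \in r1]) //; last 2 first.
- by rewrite filter_uniq.
- by move=> i hi; rewrite mem_filter; case: (boolP (i \in r1)) => //= /H ->.
rewrite big_filter [X in _ <= X](bigID (fun i => i \in r1)) /= lerDl sumr_ge0 //.
Qed.

Lemma sum_undup_le (r : seq T) (h : T -> K) : (forall i, 0 <= h i) ->
  \sum_(i <- undup r) h i <= \sum_(i <- r) h i.
Proof.
move=> h0; elim: r => [|x r IH] //=; case: ifP => _; rewrite !big_cons.
  by rewrite -[\sum_(i <- undup r) h i]add0r lerD.
by rewrite lerD.
Qed.

End SeqSums.

Section Nets.
Variable R : realType.
Local Notation C := (Cc R).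
Variable I : choiceType.

Lemma nearTot (P : {fset I} -> Prop) (A : {fset I}) :
  (forall B, (A `<=` B)%fset -> P B) -> \forall B \near totally, P B.
Proof. by move=> H; exists A. Qed.

Lemma psum_le (h : I -> C) (A B : {fset I}) : (forall i, 0 <= h i) ->
  (A `<=` B)%fset -> psum h A <= psum h B.
Proof.
move=> h0 /fsubsetP AB; apply: sum_supp_le => //; try exact: fset_uniq.
by move=> i /AB.
Qed.
End Nets.
Section Nets2.
Variable R : realType.
Local Notation C := (Cc R).
Variable I : choiceType.

Lemma usum_fin (x : I -> C) (A : {fset I}) :
  (forall i, i \notin A -> x i = 0) -> usum x = psum x A.
Proof.
move=> H; rewrite /usum; apply: cvg_lim; first exact: norm_hausdorff.
apply/cvgrPdist_lt => eps ep; apply: (@nearTot I _ A) => B AB.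
rewrite /psum -(big_fset_incl _ AB) ?subrr ?normr0 // => i _; exact: H.
Qed.
End Nets2.
Section Nets3.
Variable R : realType.
Local Notation C := (Cc R).
Variable I : choiceType.

Lemma lim_le (u v : {fset I} -> C) (a b : C) :
  u @ totally --> a -> v @ totally --> b ->
  (\forall B \near totally, u B <= v B) -> a <= b.
Proof.
move=> ua vb uv.
have wc : (v - u) @ totally --> b - a.
  apply: cvgD; [exact: vb | exact: cvgN ua].
have nc : `|(v - u) x| @[x --> totally] --> `|b - a| by apply: cvg_norm; exact: wc.
have e : {near totally, (fun B => `|(v - u) B|) =1 (v - u)}.
  move: uv; apply: filterS => B /=.
  by rewrite -subr_ge0 => /ger0_norm.
have h : (v - u) @ totally --> `|b - a| by apply: cvg_trans nc; apply: near_eq_cvg.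
have := @cvg_unique _ (@norm_hausdorff _ _) _ _ _ _ h wc => E.
by rewrite -subr_ge0 -E normr_ge0.
Qed.
End Nets3.
Section Mono.
Variable R : realType.
Local Notation C := (Cc R).
Local Notation rc x := (real_complex R x : C).
Variable I : choiceType.

Lemma normC_real (x : R) : `|rc x| = rc `|x|.
Proof.
case: (lerP 0 x) => hx.
  by rewrite !ger0_norm // ler0c.
rewrite !ltr0_norm //; last by rewrite -(rmorph0 (real_complex R)) ltcR.
by rewrite rmorphN.
Qed.

Lemma ge0_rc (z : C) : 0 <= z -> z = rc (complex.Re z).
Proof. by move/ger0_Im; case: z => a b /= ->. Qed.

Lemma mono_cvg (h : I -> C) (c : C) : (forall i, 0 <= h i) ->
  (forall B, psum h B <= c) -> cvg (psum h @ totally).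
Proof.
move=> h0 hb.
have pos B : 0 <= psum h B by apply: sumr_ge0.
pose E := [set complex.Re (psum h B) | B in [set: {fset I}]].
have hsup : has_sup E.
  split; first by exists (complex.Re (psum h fset0)); exists fset0.
  exists (complex.Re c) => y [B _ <-].
  by have := hb B; rewrite lecE => /andP[].
apply/cvg_ex; exists (rc (sup E)).
apply/cvgrPdist_lt => eps ep.
have ep' : 0 < complex.Re eps by move: ep; rewrite ltcE => /andP[].
have [_ [B0 _ <-] hlt] := sup_adherent ep' hsup.
exists B0 => // B /= sub.
have le1 : complex.Re (psum h B0) <= complex.Re (psum h B).
  by have := psum_le h0 sub; rewrite lecE => /andP[].
have le2 : complex.Re (psum h B) <= sup E.
  by apply: sup_upper_bound => //; exists B.
rewrite (ge0_rc (pos B)) (ge0_rc (ltW ep)) -rmorphB normC_real ltcR.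
rewrite ger0_norm; last by rewrite subr_ge0.
lra.
Qed.

End Mono.
Section Tail.
Variable R : realType.
Local Notation C := (Cc R).
Local Notation rc x := (real_complex R x : C).
Variable I : choiceType.

Lemma psumU (h : I -> C) (A D : {fset I}) : (forall i, i \in D -> i \notin A) ->
  psum h (A `|` D)%fset = psum h A + psum h D.
Proof.
move=> dis; rewrite /psum -big_cat; apply: perm_big; apply: uniq_perm.
- exact: fset_uniq.
- rewrite cat_uniq !fset_uniq /= andbT; apply/hasPn => i /dis //.
- by move=> i; rewrite in_fsetU mem_cat.
Qed.

Lemma psum_le_lim (q : I -> C) L : (forall i, 0 <= q i) ->
  psum q @ totally --> L -> forall B, psum q B <= L.
Proof.
move=> q0 qL B; apply: (lim_le (u := fun _ => psum q B) (v := psum q)).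
- exact: cvg_cst.
- exact: qL.
by apply: (nearTot (A:=B)) => B' sub; apply: psum_le.
Qed.

Lemma tail_small (q : I -> C) (L : C) : (forall i, 0 <= q i) ->
  psum q @ totally --> L -> forall d, 0 < d -> exists A0 : {fset I},
  forall D : {fset I}, (forall i, i \in D -> i \notin A0) -> psum q D < d.
Proof.
move=> q0 qL d dp.
have qL2 := qL; move/cvgrPdist_lt: qL2 => /(_ d dp) [A0 _ HA].
exists A0 => D dis.
have h1 := HA A0 (fsubset_refl A0).
have h2 := psum_le_lim q0 qL (A0 `|` D)%fset.
rewrite psumU // in h2.
have Lr : L - psum q A0 \is Num.real.
  rewrite rpredB // ger0_real //; last by apply: sumr_ge0.
  by apply: le_trans (psum_le_lim q0 qL fset0); apply: sumr_ge0.
apply: (le_lt_trans _ h1); apply: (le_trans _ (real_ler_norm Lr)).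
by rewrite lerBrDl.
Qed.

End Tail.
Section Tail2.
Variable R : realType.
Local Notation C := (Cc R).
Local Notation rc x := (real_complex R x : C).
Variable I : choiceType.
Lemma normc_ge_Im (x : C) : rc `|complex.Im x| <= `|x|.
Proof.
rewrite normc_def lecR.
rewrite -sqrtr_sqr ler_sqrt; last by rewrite addr_ge0 // sqr_ge0.
by rewrite lerDr sqr_ge0.
Qed.

Lemma abs_cvg (x : I -> C) c : (forall B, psum (fun i => `|x i|) B <= c) ->
  cvg (psum x @ totally).
Proof.
move=> hb.
pose a i := complex.Re (x i). pose b i := complex.Im (x i).
pose n i := Num.sqrt (a i ^+ 2 + b i ^+ 2).
pose p1 i := rc ((a i + `|a i|) / 2). pose p2 i := rc ((`|a i| - a i) / 2).
pose p3 i := rc ((b i + `|b i|) / 2). pose p4 i := rc ((`|b i| - b i) / 2).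
have ha i : `|a i| <= n i.
  by have := normc_ge_Re (x i); rewrite normc_def lecR.
have hbb i : `|b i| <= n i.
  by have := normc_ge_Im (x i); rewrite normc_def lecR.
have nx i : `|x i| = rc (n i) by rewrite normc_def.
have mc (p : I -> C) (r : I -> R) : p = (fun i => rc (r i)) ->
    (forall i, 0 <= r i <= n i) -> cvg (psum p @ totally).
  move=> -> hr; apply: (mono_cvg (c := c)).
    by move=> i; rewrite ler0c; case/andP: (hr i).
  move=> B; apply: le_trans (hb B); apply: ler_sum => i _.
  by rewrite nx lecR; case/andP: (hr i).
have fa i : [/\ a i <= `|a i|, - a i <= `|a i| & `|a i| <= n i].
  by split; [exact: ler_norm | rewrite -normrN; exact: ler_norm | exact: ha].
have fb i : [/\ b i <= `|b i|, - b i <= `|b i| & `|b i| <= n i].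
  by split; [exact: ler_norm | rewrite -normrN; exact: ler_norm | exact: hbb].
have c1 : cvg (psum p1 @ totally).
  by apply: (mc _ _ erefl) => i; case: (fa i) => *; apply/andP; split; lra.
have c2 : cvg (psum p2 @ totally).
  by apply: (mc _ _ erefl) => i; case: (fa i) => *; apply/andP; split; lra.
have c3 : cvg (psum p3 @ totally).
  by apply: (mc _ _ erefl) => i; case: (fb i) => *; apply/andP; split; lra.
have c4 : cvg (psum p4 @ totally).
  by apply: (mc _ _ erefl) => i; case: (fb i) => *; apply/andP; split; lra.
have -> : psum x = (psum p1 - psum p2) + (fun=> 'i) \* (psum p3 - psum p4).
  apply/funext => B; rewrite /psum !fctE /GRing.mul_fun -!sumrB mulr_sumr -big_split /=.
  apply: eq_bigr => i _; rewrite /p1 /p2 /p3 /p4 -!rmorphB.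
  have -> : (a i + `|a i|) / 2 - (`|a i| - a i) / 2 = a i by field.
  have -> : (b i + `|b i|) / 2 - (`|b i| - b i) / 2 = b i by field.
  exact: complexE.
apply: (@is_cvgD _ _ _ totally _ (psum p1 - psum p2) ((fun=> ('i : C)) \* (psum p3 - psum p4))). exact: (@is_cvgB _ _ _ totally _ (psum p1) (psum p2) c1 c2).
apply: is_cvgMr. exact: (@is_cvgB _ _ _ totally _ (psum p3) (psum p4) c3 c4).
Qed.

End Tail2.
Section Core.
Variables (R : realType) (V : countType) (e : rel V) (M N : nat).
Hypothesis esym : forall x y, e x y = e y x.
Variable s : V -> seq V.
Hypothesis sP : forall x y, e x y -> y \in s x.
Variable D : nat.
Hypothesis sD : forall x, (size (s x) <= D)%N.

Local Notation C := (Cc R).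
Local Notation cfg := (config V M N).
Local Notation cv := (@cval V M N).
Local Notation adj := (@cadj V e M N).

Definition moves (m : cfg) x y (n : cfg) : Prop :=
  e x y /\ cv m x = (cv n x).+1 /\ (cv m y).+1 = cv n y /\
  (forall z, z != x -> z != y -> cv m z = cv n z).

Lemma cadjE m n : adj m n <-> exists x y, moves m x y n.
Proof. by []. Qed.

Lemma moves_neq m x y n : moves m x y n -> x != y.
Proof.
move=> [_ [h1 [h2 _]]]; apply/eqP => exy; subst y.
by move: h1 h2; lia.
Qed.

Lemma moves_uniq m x y n n' : moves m x y n -> moves m x y n' -> n = n'.
Proof.
move=> [_ [a1 [a2 a3]]] [_ [b1 [b2 b3]]]; apply: val_inj; apply/fsfunP => z.
rewrite -/(cv n z) -/(cv n' z).
case: (eqVneq z x) => [->|zx]; first by apply: succn_inj; rewrite -a1 -b1.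
case: (eqVneq z y) => [->|zy]; first by rewrite -a2 -b2.
by rewrite -a3 // -b3.
Qed.

Lemma moves_sym m x y n : moves m x y n -> moves n y x m.
Proof.
move=> [exy [h1 [h2 h3]]]; split; first by rewrite esym.
split; first by rewrite h2.
split; first by rewrite h1.
by move=> z zy zx; rewrite h3.
Qed.

Lemma cadj_sym m n : adj m n -> adj n m.
Proof. by move=> [x [y /moves_sym H]]; exists y, x. Qed.

Lemma cadj_irr m : ~ adj m m.
Proof. by move=> [x [y [_ [h _]]]]; move: h => /n_Sn. Qed.

Definition supp (m : cfg) : seq V := finsupp (val m).

Lemma in_supp m z : (z \in supp m) = (cv m z != 0%N).
Proof. by rewrite /supp mem_finsupp. Qed.

Lemma cv_le m z : (cv m z <= M)%N.
Proof.
case: (boolP (z \in supp m)) => [zs|].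
  by case/andP: (valP m) => /allP /(_ z zs).
by rewrite in_supp negbK => /eqP ->.
Qed.

Lemma size_supp m : (size (supp m) <= N)%N.
Proof.
case/andP: (valP m) => _ /eqP <-.
rewrite -sum1_size /supp big_seq [X in (_ <= X)%N]big_seq.
by apply: leq_sum => z; rewrite mem_finsupp lt0n.
Qed.

Lemma moves_supp m x y n : moves m x y n -> x \in supp m /\ y \in s x.
Proof. by move=> [exy [h1 _]]; rewrite in_supp h1; split => //; apply: sP. Qed.

Definition mv (m : cfg) x y : cfg := xget m [set n | moves m x y n].

Lemma mvP m x y n : moves m x y n -> mv m x y = n.
Proof. by move=> H; apply: xget_unique => // n' /moves_uniq; apply. Qed.

Definition nb (m : cfg) : seq cfg :=
  undup [seq mv m x y | x <- supp m, y <- undup (s x)].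

Lemma nb_uniq m : uniq (nb m). Proof. exact: undup_uniq. Qed.

Lemma adj_nb m n : adj m n -> n \in nb m.
Proof.
move=> [x [y H]]; have [xs ys] := moves_supp H.
rewrite /nb mem_undup -(mvP H); apply: (@allpairs_f_dep _ _ _ (mv m)) => //.
by rewrite mem_undup.
Qed.

Lemma size_nb m : (size (nb m) <= N * D)%N.
Proof.
apply: leq_trans (size_undup _) _; rewrite size_allpairs_dep.
apply: (@leq_trans (sumn [seq D | x <- supp m])).
  elim: (supp m) => //= x r IH; apply: leq_add => //.
  exact: leq_trans (size_undup _) (sD x).
have -> : forall r : seq V, sumn [seq D | _ <- r] = (size r * D)%N.
  by elim=> //= x r ->; rewrite mulSn.
by rewrite leq_mul2r size_supp orbT.
Qed.

Local Notation w := (@weight R V M N).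

Definition phi (p q : nat) : C := (M%:R / 2) * (p + q + 1)%:R - (p * q)%:R.

Lemma phi_succ k : (k < M)%N -> phi k.+1 k = (k.+1 * (M - k))%:R.
Proof.
move=> kM; rewrite /phi.
have -> : (k.+1 + k + 1 = 2 * k.+1)%N by lia.
rewrite natrM natrM natrM natrB; last exact: ltnW.
by field.
Qed.

Lemma phi_succ' k : (k < M)%N -> phi k k.+1 = (k.+1 * (M - k))%:R.
Proof. by move=> kM; rewrite -phi_succ // /phi (addnC k) mulnC. Qed.

Lemma weight_moves m x y n : moves m x y n ->
  w m n = sqrtC (phi (cv m x) (cv n x)) * sqrtC (phi (cv m y) (cv n y)).
Proof.
move=> H; have xy := moves_neq H; move: H => [exy [h1 [h2 h3]]].
rewrite /weight big_fset_condE.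
have -> : [fset z in (finsupp (val m) `|` finsupp (val n))%fset | cv m z != cv n z]%fset
          = [fset x; y]%fset.
  apply/fsetP => z; rewrite !inE /= !mem_finsupp -/(cv m z) -/(cv n z).
  case: (eqVneq z x) => [->|zx]; first by rewrite h1 /=; lia.
  case: (eqVneq z y) => [->|zy]; first by rewrite -h2 /= orbT; lia.
  by rewrite h3 // eqxx andbF.
rewrite big_fsetU1 ?big_seq_fset1 //.
by rewrite !inE.
Qed.

Lemma weight_val m x y n : moves m x y n ->
  w m n = sqrtC ((cv m x * (M - cv n x))%:R) * sqrtC (((cv m y).+1 * (M - cv m y))%:R).
Proof.
move=> H; rewrite (weight_moves H); move: H => [exy [h1 [h2 h3]]].
have a1 := cv_le m x; have a2 := cv_le n y.
have k1 : (cv n x < M)%N by lia.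
have k2 : (cv m y < M)%N by lia.
by rewrite h1 (phi_succ k1) -h1 -h2 (phi_succ' k2) h2.
Qed.

Lemma weight_bound m x y n : moves m x y n ->
  0 <= w m n /\ w m n <= (M * cv m x * (M - cv m y))%:R.
Proof.
move=> H; rewrite (weight_val H); move: H => [exy [h1 [h2 h3]]].
have a1 := cv_le m x; have a2 := cv_le n y.
split; first by rewrite mulr_ge0 // sqrtC_ge0 ler0n.
rewrite -sqrtCM ?nnegrE ?ler0n // -natrM.
rewrite -[X in _ <= X](@sqrCK _ (M * cv m x * (M - cv m y))%:R) ?ler0n //.
rewrite -natrX ler_sqrtC ?nnegrE ?ler0n // ler_nat.
rewrite h1 -h2 in a1 a2 *.
set k := cv n x in a1 *; set j := cv m y in a2 *.
have l1 : (k.+1 * (M - k) <= k.+1 * (M * k.+1))%N.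
  by rewrite leq_mul2l; apply/orP; right; nia.
have l2 : (j.+1 * (M - j) <= (M * (M - j)) * (M - j))%N.
  by rewrite leq_mul2r; apply/orP; right; nia.
apply: (leq_trans (leq_mul l1 l2)).
by rewrite leq_eqVlt; apply/orP; left; apply/eqP; nia.
Qed.

Lemma weight_sym m n : w m n = w n m.
Proof.
rewrite /weight fsetUC; apply: eq_big => [z|z _]; first by rewrite eq_sym.
by rewrite (addnC (cv m z)) mulnC.
Qed.

Lemma usum_seq (I : choiceType) (x : I -> C) (r : seq I) : uniq r ->
  (forall i, x i != 0 -> i \in r) -> usum x = \sum_(i <- r) x i.
Proof.
move=> ur H; rewrite (usum_fin (A := seq_fset tt r)); last first.
  by move=> i; rewrite seq_fsetE; apply: contraNeq => /H.
apply: sum_supp_eq; [exact: fset_uniq | exact: ur | by move=> i _; rewrite seq_fsetE].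
Qed.

Lemma sum_const_seq (T : Type) (r : seq T) (c : C) : \sum_(i <- r) c = c *+ size r.
Proof. by elim: r => [|x r IH]; rewrite ?big_nil ?big_cons ?IH ?mulrS. Qed.

Definition Tm (m : cfg) : seq V := undup (supp m ++ flatten [seq s x | x <- supp m]).

Lemma Tm_supp m x : x \in supp m -> x \in Tm m.
Proof. by move=> xs; rewrite mem_undup mem_cat xs. Qed.

Lemma Tm_s m x y : x \in supp m -> y \in s x -> y \in Tm m.
Proof.
move=> xs ys; rewrite mem_undup mem_cat; apply/orP; right.
by apply/flatten_mapP; exists x.
Qed.

Lemma size_Tm m : (size (Tm m) <= N + N * D)%N.
Proof.
apply: leq_trans (size_undup _) _; rewrite size_cat leq_add ?size_supp //.
rewrite size_flatten /shape -map_comp.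
apply: (@leq_trans (sumn [seq D | x <- supp m])).
  by elim: (supp m) => //= x r IH; apply: leq_add => //; exact: sD.
have -> : forall r : seq V, sumn [seq D | _ <- r] = (size r * D)%N.
  by elim=> //= x r ->; rewrite mulSn.
by rewrite leq_mul2r size_supp orbT.
Qed.

Definition gv (m : cfg) x y : C :=
  (M%:R / 2) * (cv m x + cv m y)%:R - (cv m x * cv m y)%:R.

Lemma gv_nat m x y :
  gv m x y = (cv m x * (M - cv m y) + cv m y * (M - cv m x))%:R / 2.
Proof.
have a1 := cv_le m x; have a2 := cv_le m y.
rewrite /gv [in RHS]natrD [in RHS]natrM [in RHS]natrM (natrB _ a2) (natrB _ a1).
rewrite natrD natrM; by field.
Qed.

Local Notation VN := (@V_N R V e M N).

Lemma VN_eq m : VN m =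
  2^-1 * \sum_(x <- Tm m) \sum_(y <- Tm m) (if e x y then gv m x y else 0).
Proof.
rewrite /V_N (usum_seq (r := [seq (x, y) | x <- Tm m, y <- Tm m])).
- by rewrite big_allpairs.
- apply: allpairs_uniq; try exact: undup_uniq.
  by move=> [a b] [c d] _ _ /=.
move=> [x y] /=; case: ifP => exy gn; last by rewrite eqxx in gn.
have : (cv m x != 0%N) || (cv m y != 0%N).
  apply: contraNT gn; rewrite negb_or !negbK => /andP[/eqP hx /eqP hy].
  by rewrite -/(cv m x) -/(cv m y) hx hy /= mulr0 subr0.
case/orP => [hx|hy]; apply: allpairs_f.
- by apply: Tm_supp; rewrite in_supp.
- by apply: (@Tm_s _ x); [rewrite in_supp | apply: sP].
- by apply: (@Tm_s _ y); [rewrite in_supp | apply: sP; rewrite esym].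
- by apply: Tm_supp; rewrite in_supp.
Qed.

Definition Vmax : C := ((N + N * D) ^ 2 * M ^ 2)%:R.

Lemma VN_bound m : 0 <= VN m /\ VN m <= Vmax.
Proof.
rewrite VN_eq.
have gb x y : 0 <= (if e x y then gv m x y else 0) <= (M ^ 2)%:R.
  case: (e x y); last by rewrite lexx ler0n.
  have a1 := cv_le m x; have a2 := cv_le m y.
  rewrite gv_nat; apply/andP; split.
    by rewrite divr_ge0 ?ler0n.
  rewrite ler_pdivrMr ?ltr0n // -natrM ler_nat; nia.
split.
  apply: mulr_ge0; first by rewrite invr_ge0 ler0n.
  apply: sumr_ge0 => x _.
  by apply: sumr_ge0 => y _; case/andP: (gb x y).
apply: (@le_trans _ _ (\sum_(x <- Tm m) \sum_(y <- Tm m) (M ^ 2)%:R)).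
  apply: (@le_trans _ _ (\sum_(x <- Tm m) \sum_(y <- Tm m) (if e x y then gv m x y else 0))).
    apply: ler_piMl.
      by apply: sumr_ge0 => x _; apply: sumr_ge0 => y _; case/andP: (gb x y).
    by rewrite invf_le1 ?ltr0n // ler1n.
  by apply: ler_sum => x _; apply: ler_sum => y _; case/andP: (gb x y).
rewrite !sum_const_seq -!mulrnA ler_nat /Vmax.
have := size_Tm m; set t := size (Tm m) => ht.
rewrite mulnC leq_mul2r; apply/orP; right.
by rewrite expnS expn1 leq_mul.
Qed.

Lemma H_ge0 m n : 0 <= (if `[< adj m n >] then w m n else 0).
Proof. by case: asboolP => // [[x [y Hm]]]; exact: (weight_bound Hm).1. Qed.

Lemma sm_bound m :
  \sum_(n <- nb m) (if `[< adj m n >] then w m n else 0) <= 2 * M%:R * VN m.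
Proof.
apply: le_trans (sum_undup_le _ (H_ge0 m)) _.
rewrite big_allpairs_dep /=.
pose Q x y : C := if e x y then (M * cv m x * (M - cv m y))%:R else 0.
have Q0 x y : 0 <= Q x y by rewrite /Q; case: (e x y); rewrite ?ler0n.
have HQ x y : (if `[< adj m (mv m x y) >] then w m (mv m x y) else 0) <= Q x y.
  rewrite /mv; case: xgetP => [n _ Hn|NP].
    have [exy _] := Hn; rewrite /Q exy; case: asboolP => _; last exact: ler0n.
    exact: (weight_bound Hn).2.
  by rewrite asboolF //; apply: cadj_irr.
apply: (@le_trans _ _ (\sum_(x <- supp m) \sum_(y <- undup (s x)) Q x y)).
  by apply: ler_sum => x _; apply: ler_sum => y _; exact: HQ.
apply: (@le_trans _ _ (\sum_(x <- supp m) \sum_(y <- Tm m) Q x y)).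
  rewrite big_seq_cond [X in _ <= X]big_seq_cond; apply: ler_sum => x /andP[xs _].
  apply: sum_supp_le; [exact: undup_uniq | exact: undup_uniq | exact: Q0 |].
  by move=> y; rewrite mem_undup => ys _; apply: (Tm_s xs).
apply: (@le_trans _ _ (\sum_(x <- Tm m) \sum_(y <- Tm m) Q x y)).
  apply: sum_supp_le; [exact: fset_uniq | exact: undup_uniq | |].
    by move=> x; apply: sumr_ge0 => y _; exact: Q0.
  by move=> x xs _; apply: Tm_supp.
pose P x y : C := if e x y then (cv m x * (M - cv m y))%:R else 0.
have E1 : \sum_(x <- Tm m) \sum_(y <- Tm m) (if e x y then gv m x y else 0)
        = \sum_(x <- Tm m) \sum_(y <- Tm m) P x y.
  have -> : \sum_(x <- Tm m) \sum_(y <- Tm m) (if e x y then gv m x y else 0)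
          = \sum_(x <- Tm m) \sum_(y <- Tm m) ((P x y + P y x) / 2).
    apply: eq_bigr => x _; apply: eq_bigr => y _.
    rewrite /P (esym y x); case: (e x y); last by rewrite addr0 mul0r.
    by rewrite gv_nat natrD.
  under eq_bigr do rewrite -mulr_suml big_split /=.
  rewrite -mulr_suml big_split /= [X in _ + X]exchange_big /=.
  by field.
have E2 : \sum_(x <- Tm m) \sum_(y <- Tm m) Q x y
        = M%:R * \sum_(x <- Tm m) \sum_(y <- Tm m) P x y.
  rewrite mulr_sumr; apply: eq_bigr => x _; rewrite mulr_sumr; apply: eq_bigr => y _.
  by rewrite /Q /P; case: (e x y); rewrite ?mulr0 // -mulnA natrM.
rewrite VN_eq E1 E2.
have -> : 2 * M%:R * (2^-1 * \sum_(x <- Tm m) \sum_(y <- Tm m) P x y)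
        = M%:R * \sum_(x <- Tm m) \sum_(y <- Tm m) P x y by field.
exact: lexx.
Qed.

Lemma amgm (x y : C) : 0 <= x -> 0 <= y -> x * y <= (x ^+ 2 + y ^+ 2) / 2.
Proof.
move=> hx hy; rewrite -subr_ge0.
have -> : (x ^+ 2 + y ^+ 2) / 2 - x * y = (x - y) ^+ 2 / 2 by field.
rewrite divr_ge0 ?ler0n // -realEsqr rpredB // ger0_real //.
Qed.

Definition Wc : C := (M ^ 3)%:R.
Definition Kc : C := (N * D)%:R.

Lemma Wc_ge0 : 0 <= Wc. Proof. exact: ler0n. Qed.
Lemma Kc_ge0 : 0 <= Kc. Proof. exact: ler0n. Qed.

Lemma w_le m n : adj m n -> 0 <= w m n /\ w m n <= Wc.
Proof.
move=> [x [y Hm]]; have [h1 h2] := weight_bound Hm; split => //.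
apply: le_trans h2 _; rewrite ler_nat.
have := cv_le m x; have : (M - cv m y <= M)%N by apply: leq_subr.
by move=> *; rewrite expnS expnS expn1 mulnA leq_mul // leq_mul.
Qed.

Lemma adj_asbool m n : `[< adj n m >] = `[< adj m n >].
Proof. by apply/asboolP/asboolP => /cadj_sym. Qed.

Lemma nb_count m (t : C) : 0 <= t ->
  \sum_(n <- nb m) (if `[< adj m n >] then t else 0) <= Kc * t.
Proof.
move=> t0; apply: (@le_trans _ _ (\sum_(n <- nb m) t)).
  by apply: ler_sum => n _; case: ifP.
rewrite sum_const_seq -mulr_natl /Kc ler_wpM2r // ler_nat; exact: size_nb.
Qed.

Lemma Mult (X : seq cfg) (h : cfg -> C) (E : seq cfg) :
  uniq X -> uniq E -> (forall n, 0 <= h n) ->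
  (forall m n, m \in X -> adj m n -> h n != 0 -> n \in E) ->
  \sum_(m <- X) \sum_(n <- nb m) (if `[< adj m n >] then h n else 0)
    <= Kc * \sum_(n <- E) h n.
Proof.
move=> uX uE h0 HE.
have G0 m n : 0 <= (if `[< adj m n >] then h n else 0) by case: ifP.
have -> : \sum_(m <- X) \sum_(n <- nb m) (if `[< adj m n >] then h n else 0)
        = \sum_(m <- X) \sum_(n <- E) (if `[< adj m n >] then h n else 0).
  rewrite big_seq_cond [RHS]big_seq_cond; apply: eq_bigr => m /andP[mX _].
  apply: sum_supp_eq; [exact: nb_uniq | exact: uE |] => n.
  case: asboolP => [a hn|_]; last by rewrite eqxx.
  by rewrite (adj_nb a) (HE m n mX a hn).
rewrite exchange_big mulr_sumr; apply: ler_sum => n _.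
have -> : \sum_(m <- X) (if `[< adj m n >] then h n else 0)
        = \sum_(m <- X) (if `[< adj n m >] then h n else 0).
  by apply: eq_bigr => m _; rewrite adj_asbool.
apply: (@le_trans _ _ (\sum_(m <- nb n) (if `[< adj n m >] then h n else 0))).
  apply: sum_supp_le; [exact: uX | exact: nb_uniq | by move=> m; case: ifP |].
  by move=> m _; case: asboolP => [a _|_]; [exact: adj_nb | rewrite eqxx].
exact: nb_count.
Qed.

Variable f : cfg -> C.
Local Notation AN := (@A_N R V e M N).

Definition q m : C := `|f m| ^+ 2.
Definition c m n : C := if `[< adj m n >] then (f m)^* * (w m n * f n) else 0.

Lemma q_ge0 m : 0 <= q m. Proof. by rewrite /q; apply: exprn_ge0. Qed.

Lemma c_sym m n : c n m = (c m n)^*.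
Proof.
rewrite /c adj_asbool; case: asboolP => [a|_]; last by rewrite conjC0.
have w0 := (w_le a).1.
by rewrite !rmorphM /= conjCK (geC0_conj w0) weight_sym; ring.
Qed.

Lemma c_norm m n :
  `|c m n| <= (if `[< adj m n >] then w m n * ((q m + q n) / 2) else 0).
Proof.
rewrite /c; case: asboolP => [a|_]; last by rewrite normr0.
have [w0 _] := w_le a.
rewrite !normrM norm_conjC (ger0_norm w0) mulrCA ler_wpM2l //.
by apply: amgm; apply: normr_ge0.
Qed.

Lemma c_normW m n : `|c m n| <=
  Wc * ((if `[< adj m n >] then q m else 0) + (if `[< adj m n >] then q n else 0)).
Proof.
apply: le_trans (c_norm m n) _; case: asboolP => [a|_]; last by rewrite addr0 mulr0.
have [w0 wW] := w_le a.
apply: ler_pM.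
- exact: w0.
- by rewrite divr_ge0 ?addr_ge0 ?q_ge0.
- exact: wW.
by rewrite ler_pdivrMr ?ltr0n // ler_peMr ?ler1n // addr_ge0 // q_ge0.
Qed.

Lemma a_eq m : (f m)^* * AN f m = \sum_(n <- nb m) c m n.
Proof.
rewrite /A_N (usum_seq (r := nb m)).
- by rewrite mulr_sumr; apply: eq_bigr => n _; rewrite /c; case: asboolP => _; rewrite ?mulr0.
- exact: nb_uniq.
move=> n; case: asboolP => [a _|_]; [exact: adj_nb | by rewrite eqxx].
Qed.

Lemma b_eq m : (f m)^* * (VN m * f m) = VN m * q m.
Proof. by rewrite /q normCKC; ring. Qed.

Definition SB (B : {fset cfg}) : C := \sum_(m <- B) \sum_(n <- B) c m n.
Definition TB (B : {fset cfg}) : C := \sum_(m <- B) \sum_(n <- nb m | n \notin B) c m n.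

Lemma psum_a_split B : psum (fun m => (f m)^* * AN f m) B = SB B + TB B.
Proof.
rewrite /psum /SB /TB -big_split; apply: eq_bigr => m _.
rewrite a_eq (bigID (fun n => n \in B)) /=; congr (_ + _).
rewrite -big_filter; apply: sum_supp_eq; [by rewrite filter_uniq ?nb_uniq | exact: fset_uniq |].
move=> n; rewrite mem_filter /c; case: asboolP => [a _|_]; last by rewrite eqxx.
by rewrite (adj_nb a) andbT.
Qed.

Lemma SB_real B : SB B \is Num.real.
Proof.
apply/CrealP; rewrite /SB rmorph_sum /=.
under eq_bigr do rewrite rmorph_sum /=.
rewrite exchange_big; apply: eq_bigr => n _; apply: eq_bigr => m _.
by rewrite -c_sym.
Qed.

Lemma SB_le B : SB B <= 2 * M%:R * psum (fun m => VN m * q m) B.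
Proof.
apply: le_trans (real_ler_norm (SB_real B)) _.
apply: le_trans (ler_norm_sum _ _ _) _.
apply: (@le_trans _ _ (\sum_(m <- B) \sum_(n <- B)
          (if `[< adj m n >] then w m n * ((q m + q n) / 2) else 0))).
  apply: ler_sum => m _; apply: le_trans (ler_norm_sum _ _ _) _.
  by apply: ler_sum => n _; exact: c_norm.
pose d1 m n := if `[< adj m n >] then w m n * q m else 0.
have -> : \sum_(m <- B) \sum_(n <- B)
          (if `[< adj m n >] then w m n * ((q m + q n) / 2) else 0)
        = \sum_(m <- B) \sum_(n <- B) d1 m n.
  have -> : \sum_(m <- B) \sum_(n <- B)
          (if `[< adj m n >] then w m n * ((q m + q n) / 2) else 0)
        = \sum_(m <- B) \sum_(n <- B) ((d1 m n + d1 n m) / 2).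
    apply: eq_bigr => m _; apply: eq_bigr => n _.
    rewrite /d1 adj_asbool weight_sym; case: ifP; last by rewrite addr0 mul0r.
    by move=> _; field.
  under eq_bigr do rewrite -mulr_suml big_split /=.
  rewrite -mulr_suml big_split /= [X in _ + X]exchange_big /=.
  by field.
rewrite /psum mulr_sumr; apply: ler_sum => m _.
have -> : \sum_(n <- B) d1 m n
        = q m * \sum_(n <- B) (if `[< adj m n >] then w m n else 0).
  by rewrite mulr_sumr; apply: eq_bigr => n _; rewrite /d1; case: ifP; rewrite ?mulr0 // mulrC.
rewrite mulrA [X in _ <= X]mulrC; apply: ler_wpM2l; first exact: q_ge0.
apply: le_trans (sm_bound m).
apply: sum_supp_le; [exact: fset_uniq | exact: nb_uniq | exact: H_ge0 |].
by move=> n _; case: asboolP => [a _|_]; [exact: adj_nb | rewrite eqxx].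
Qed.

Definition nbU (B : {fset cfg}) : {fset cfg} := seq_fset tt (flatten [seq nb m | m <- B]).

Lemma nbU_in (B : {fset cfg}) m n : m \in B -> n \in nb m -> n \in nbU B.
Proof. by move=> mB nm; rewrite seq_fsetE; apply/flatten_mapP; exists m. Qed.

Lemma abs_a_bound (Lq : C) : psum q @ totally --> Lq -> forall B,
  psum (fun m => `|(f m)^* * AN f m|) B <= 2 * Wc * Kc * Lq.
Proof.
move=> hL B.
have qL B' := psum_le_lim q_ge0 hL B'.
apply: (@le_trans _ _ (Wc * (\sum_(m <- B) \sum_(n <- nb m)
    (if `[< adj m n >] then q m else 0) + \sum_(m <- B) \sum_(n <- nb m)
    (if `[< adj m n >] then q n else 0)))).
  rewrite -big_split mulr_sumr /psum; apply: ler_sum => m _.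
  rewrite a_eq; apply: le_trans (ler_norm_sum _ _ _) _.
  rewrite -big_split mulr_sumr; apply: ler_sum => n _; exact: c_normW.
have h1 : \sum_(m <- B) \sum_(n <- nb m) (if `[< adj m n >] then q m else 0) <= Kc * Lq.
  apply: (@le_trans _ _ (\sum_(m <- B) Kc * q m)).
    by apply: ler_sum => m _; apply: nb_count; exact: q_ge0.
  by rewrite -mulr_sumr; apply: ler_wpM2l; [exact: Kc_ge0 | exact: qL].
have h2 : \sum_(m <- B) \sum_(n <- nb m) (if `[< adj m n >] then q n else 0) <= Kc * Lq.
  apply: le_trans (Mult (E := nbU B) _ _ _ _) _.
  - exact: fset_uniq.
  - exact: fset_uniq.
  - exact: q_ge0.
  - by move=> m n mB a _; apply: (nbU_in mB); apply: adj_nb.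
  by apply: ler_wpM2l; [exact: Kc_ge0 | exact: qL].
apply: le_trans (ler_wpM2l Wc_ge0 (lerD h1 h2)) _.
suff -> : 2 * Wc * Kc * Lq = Wc * (Kc * Lq + Kc * Lq) by exact: lexx.
ring.
Qed.

Lemma TB_cvg (Lq : C) : psum q @ totally --> Lq -> TB @ totally --> 0.
Proof.
move=> hL; apply/cvgr0Pnorm_lt => eps ep.
pose t := 2 * Wc * Kc.
have t0 : 0 <= t by rewrite /t !mulr_ge0 ?ler0n ?Wc_ge0 ?Kc_ge0.
pose dl := eps / (t + 1).
have dl0 : 0 < dl by rewrite /dl divr_gt0 // ltr_wpDl.
have [A0 HA0] := tail_small q_ge0 hL dl0.
apply: (nearTot (A := (A0 `|` nbU A0)%fset)) => B sub.
have A0B : forall m, m \in A0 -> m \in B.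
  by move=> m mA; apply: (fsubsetP sub); rewrite in_fsetU mA.
pose h n := if n \notin B then q n else 0.
pose tau m := \sum_(n <- nb m) (if n \notin B then
    Wc * ((if `[< adj m n >] then q m else 0) + (if `[< adj m n >] then q n else 0))
    else 0).
have le1 : `|TB B| <= \sum_(m <- B) tau m.
  apply: le_trans (ler_norm_sum _ _ _) _; apply: ler_sum => m _.
  apply: le_trans (ler_norm_sum _ _ _) _; rewrite /tau big_mkcond /=.
  by apply: ler_sum => n _; case: ifP => _; [exact: c_normW | exact: lexx].
have tauA0 m : m \in A0 -> tau m = 0.
  move=> mA; rewrite /tau big_seq; apply: big1 => n nm.
  suff -> : n \in B by [].
  by apply: (fsubsetP sub); rewrite in_fsetU (nbU_in mA nm) orbT.
have e1 : \sum_(m <- B) tau m = \sum_(m <- (B `\` A0)%fset) tau m.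
  apply: sum_supp_eq; [exact: fset_uniq | exact: fset_uniq |] => m.
  rewrite in_fsetD; case: (boolP (m \in A0)) => [mA|_ //].
  by rewrite tauA0 // eqxx.
have le2 : \sum_(m <- (B `\` A0)%fset) tau m <= Wc * (Kc * dl + Kc * dl).
  have -> : \sum_(m <- (B `\` A0)%fset) tau m = Wc *
      (\sum_(m <- (B `\` A0)%fset) \sum_(n <- nb m)
          (if n \notin B then (if `[< adj m n >] then q m else 0) else 0)
     + \sum_(m <- (B `\` A0)%fset) \sum_(n <- nb m) (if `[< adj m n >] then h n else 0)).
    rewrite -big_split mulr_sumr; apply: eq_bigr => m _.
    rewrite /tau -big_split mulr_sumr; apply: eq_bigr => n _.
    by rewrite /h; case: (n \in B); case: `[< adj m n >]; rewrite /= ?addr0 ?mulr0.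
  apply: ler_wpM2l; first exact: Wc_ge0.
  apply: lerD.
    apply: (@le_trans _ _ (\sum_(m <- (B `\` A0)%fset) Kc * q m)).
      apply: ler_sum => m _; apply: le_trans (nb_count m (q_ge0 m)).
      by apply: ler_sum => n _; case: ifP => _; [exact: lexx | case: ifP => _; rewrite ?q_ge0].
    rewrite -mulr_sumr; apply: ler_wpM2l; first exact: Kc_ge0.
    apply: ltW; apply: HA0 => m; rewrite in_fsetD => /andP[] //.
  apply: le_trans (Mult (E := (nbU B `\` B)%fset) _ _ _ _) _.
  - exact: fset_uniq.
  - exact: fset_uniq.
  - by move=> n; rewrite /h; case: ifP => _; rewrite ?q_ge0.
  - move=> m n; rewrite in_fsetD => /andP[_ mB] a; rewrite /h.
    case: ifP => nB hn; last by rewrite eqxx in hn.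
    by rewrite in_fsetD nB (nbU_in mB (adj_nb a)).
  apply: ler_wpM2l; first exact: Kc_ge0.
  have -> : \sum_(n <- (nbU B `\` B)%fset) h n = psum q (nbU B `\` B)%fset.
    rewrite /psum big_seq [RHS]big_seq; apply: eq_bigr => n.
    by rewrite in_fsetD /h => /andP[-> _].
  apply: ltW; apply: HA0 => n; rewrite in_fsetD => /andP[nB _].
  by apply: contra nB; apply: A0B.
apply: le_lt_trans le1 _; rewrite e1; apply: le_lt_trans le2 _.
have -> : Wc * (Kc * dl + Kc * dl) = t * dl by rewrite /t; ring.
rewrite /dl mulrA ltr_pdivrMr ?ltr_wpDl // mulrDr mulr1 mulrC ltrDl //.
Qed.

Lemma part1 : ell2_on setT f -> qform_A e f <= 2 * M%:R * qform_V e f.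
Proof.
move=> hl2.
have qE : (fun i => if `[< [set: cfg] i >] then `|f i| ^+ 2 else 0) = q.
  by apply/funext => i; rewrite asboolT.
rewrite /ell2_on qE in hl2.
have hL : psum q @ totally --> lim (psum q @ totally) := hl2.
set Lq := lim (psum q @ totally) in hL.
pose a m := (f m)^* * AN f m.
pose b m := VN m * q m.
have ca : cvg (psum a @ totally).
  exact: (@abs_cvg R _ a _ (abs_a_bound hL)).
have b0 m : 0 <= b m by apply: mulr_ge0; [exact: (VN_bound m).1 | exact: q_ge0].
have cb : cvg (psum b @ totally).
  apply: (mono_cvg (c := Vmax * Lq)) => // B.
  apply: (@le_trans _ _ (\sum_(m <- B) Vmax * q m)).
    apply: ler_sum => m _; apply: ler_wpM2r; [exact: q_ge0 | exact: (VN_bound m).2].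
  rewrite -mulr_sumr; apply: ler_wpM2l; first exact: ler0n.
  exact: psum_le_lim q_ge0 hL B.
(have bE : (fun m => (f m)^* * (VN m * f m)) = b).
  (by apply/funext => m; exact: b_eq).
(rewrite /qform_V bE /qform_A /usum -/a).
(apply: (lim_le (u := psum a - TB) (v := fun B => 2 * M%:R * psum b B))).
- (have h1 : (psum a - TB) @ totally --> lim (psum a @ totally) - 0).
    (exact: cvgB ca (TB_cvg hL)).
  (by rewrite subr0 in h1).
- (by apply: cvgMr; exact: cb).
(apply: (nearTot (A := fset0)) => B _).
(by rewrite !fctE psum_a_split addrK; exact: SB_le).
Qed.

End Core.

Theorem mainTheorem3 (R : realType) (V : countType) (e : rel V) (M N : nat) :
  simple_graph e -> connected_graph e -> bounded_degree e ->
  (forall f : config V M N -> Cc R, ell2_on setT f ->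
     qform_A e f <= 2 * M%:R * qform_V e f) /\
  (forall (S : set (config V M N)) (f : config V M N -> Cc R), ell2_on S f ->
     qform_adjop e S f <= 2 * M%:R * qform_V_on e S f).
Proof.
move=> [esym _] _ [D HD].
have [s hs] := choice HD.
have sP x y : e x y -> y \in s x by move=> exy; exact: (hs x).2.
have sD x : (size (s x) <= D)%N by exact: (hs x).1.
have P1 := part1 esym sP sD.
split; first exact: P1.
move=> S f hf.
pose g m := if `[< S m >] then f m else 0.
have inner m n : (if `[< S n /\ cadj e m n >] then @weight R V M N m n * f n else 0)
               = (if `[< cadj e m n >] then @weight R V M N m n * g n else 0).
  rewrite /g; case: asboolP => [[Sn a]|nsa].
    by rewrite (asboolT a) (asboolT Sn).
  case: asboolP => // a; case: asboolP => Sn; last by rewrite mulr0.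
  by exfalso; apply: nsa.
have E1 : qform_adjop e S f = qform_A e g.
  rewrite /qform_adjop /qform_A; congr usum; apply/funext => m.
  rewrite /g; case: asboolP => Sm; last by rewrite conjC0 mul0r.
  congr (_ * _); rewrite /adjop /A_N; congr usum; apply/funext => n.
  exact: inner.
have E2 : qform_V_on e S f = qform_V e g.
  rewrite /qform_V_on /qform_V; congr usum; apply/funext => m.
  by rewrite /g; case: asboolP => Sm; rewrite ?conjC0 ?mul0r.
have E3 : ell2_on setT g.
  move: hf; rewrite /ell2_on.
  have -> : (fun i => if `[< [set: config V M N] i >] then `|g i| ^+ 2 else 0)
          = (fun i => if `[< S i >] then `|f i| ^+ 2 else 0).
    apply/funext => i; rewrite asboolT // /g.
    by case: asboolP => _; rewrite ?normr0 ?expr0n.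
  by [].
by rewrite E1 E2; exact: P1.
Qed.
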